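(* For every $k\ge1$, every clean universal $k$-URA $\mathcal A$ over $(\mathbb N;=)$ (over any finite alphabet), every configuration $C$ reachable in $\mathcal A$ and every location $\ell$ of $\mathcal A$, the number of states in $C$ with location $\ell$ is at most $(k\cdot4^k\cdot k!)^k$. In other words, $N_k\le(k\cdot 4^k\cdot k!)^k$.
   Context: Let $\Sigma$ be a finite alphabet; data words are finite sequences in $(\Sigma\times\mathbb N)^*$. Let $\mathbb N_\bot=\mathbb N\cup\{\bot\}$, $\bot$ equal only to itself. Register constraints over registers $\mathcal R$ are Boolean combinations of atoms $t_1=t_2$ with $t_i\in\{\#\}\cup\{r,\dot r:r\in\mathcal R\}$, interpreted on triples $(\mathbf u,d,\mathbf v)$ (current valuation, input datum, next valuation, valuations $\mathcal R\to\mathbb N_\bot$). A $k$-RA over $(\mathbb N;=)$ is $(\mathcal R,\mathcal L,\ell_{init},\mathcal L_{acc},E)$ with $|\mathcal R|=k$, finite locations, finite edges $(\ell,\sigma,\phi,\ell')$ whose constraints contain for each register $r$ a conjunct $\dot r=r$ or $\dot r=\#$. States are $\ell(\mathbf u)$; the initial state is $\ell_{init}$ with all registers $\bot$; $\ell(\mathbf u)\xrightarrow{\sigma,d}\ell'(\mathbf u')$ if some edge $(\ell,\sigma,\phi,\ell')$ has $(\mathbf u,d,\mathbf u')\models\phi$. A word is accepted from a state if some run on it from that state ends in a state with location in $\mathcal L_{acc}$; $L(\mathcal A)$: words accepted from the initial state; universal means $L(\mathcal A)=(\Sigma\times\mathbb N)^*$. A $k$-URA is a $k$-RA where each data word has at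 most one initialized accepting run. Clean: every reachable state $\ell(u_1,\dots,u_k)$ accepts some word and no element of $\mathbb N$ occurs in two different components of $(u_1,\dots,u_k)$. A configuration is a set of states; $\mathrm{succ}(C,(\sigma,d))$ is the set of states reachable by one transition on $(\sigma,d)$ from a state in $C$, extended to words; $C$ is reachable if $C=\mathrm{succ}(\{\text{initial state}\},w)$ for some data word $w$. $N_k$ denotes the supremum, over all clean universal $k$-URA $\mathcal A$ over $(\mathbb N;=)$ and all configurations $C$ reachable in $\mathcal A$, of the maximal number of distinct states in $C$ sharing the same location. *)

(* Defs.v *)
From Stdlib Require List.
From mathcomp Require Import all_boot.
Set Implicit Arguments. Unset Strict Implicit. Unset Printing Implicit Defensive.

(* Registers of a k-RA are 'I_k; the value domain N_bot is option nat
   (None = bot, equal only to itself). *)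
Definition valuation (k : nat) := {ffun 'I_k -> option nat}.

Inductive term (k : nat) : Type :=
| Cur of 'I_k      (* r       : current value of register r *)
| Nxt of 'I_k      (* \dot r  : next value of register r *)
| Dat.             (* #       : input datum *)
Arguments Dat {k}.

Inductive constr (k : nat) : Type :=
| CTrue
| Atom of term k & term k
| CNot of constr k
| CAnd of constr k & constr k
| COr of constr k & constr k.
Arguments CTrue {k}.

Definition eval_term k (u : valuation k) (d : nat) (v : valuation k)
  (t : term k) : option nat :=
  match t with
  | Cur r => u r
  | Nxt r => v r
  | Dat => Some d
  end.

Fixpoint sat k (u : valuation k) (d : nat) (v : valuation k) (phi : constr k)
  : Prop :=
  match phi with
  | CTrue => True
  | Atom t1 t2 => eval_term u d v t1 = eval_term u d v t2
  | CNot p => ~ sat u d v p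
  | CAnd p q => sat u d v p /\ sat u d v q
  | COr p q => sat u d v p \/ sat u d v q
  end.

Fixpoint conjuncts k (phi : constr k) : list (constr k) :=
  match phi with
  | CAnd p q => conjuncts p ++ conjuncts q
  | _ => [:: phi]
  end.

Definition edge_constr_ok k (phi : constr k) : Prop :=
  forall r : 'I_k,
    List.In (Atom (Nxt r) (Cur r)) (conjuncts phi) \/
    List.In (Atom (Nxt r) Dat) (conjuncts phi).

Record RA (k : nat) (Sigma L : finType) := mkRA {
  ra_init : L;
  ra_acc : {set L};
  ra_edges : seq (L * Sigma * constr k * L)
}.

Definition wf_RA k (Sigma L : finType) (A : RA k Sigma L) : Prop :=
  forall e, List.In e (ra_edges A) -> edge_constr_ok e.1.2.

Definition state k (L : finType) := (L * valuation k)%type.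

Definition data_word (Sigma : finType) := seq (Sigma * nat).

Definition init_state k Sigma L (A : RA k Sigma L) : state k L :=
  (ra_init A, [ffun _ => None]).

Definition step k Sigma L (A : RA k Sigma L) (s : state k L)
  (a : Sigma * nat) (s' : state k L) : Prop :=
  exists phi, List.In (s.1, a.1, phi, s'.1) (ra_edges A) /\ sat s.2 a.2 s'.2 phi.

(* rho is a run on w from s: rho lists the states visited after each letter. *)
Fixpoint is_run k Sigma L (A : RA k Sigma L) (s : state k L)
  (w : data_word Sigma) (rho : seq (state k L)) : Prop :=
  match w, rho with
  | [::], [::] => True
  | a :: w', s1 :: rho' => step A s a s1 /\ is_run A s1 w' rho'
  | _, _ => False
  end.

Definition accepting_run k Sigma L (A : RA k Sigma L) (s : state k L)
  (w : data_word Sigma) (rho : seq (state k L)) : Prop :=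
  is_run A s w rho /\ (last s rho).1 \in ra_acc A.

Definition accepts_from k Sigma L (A : RA k Sigma L) (s : state k L)
  (w : data_word Sigma) : Prop :=
  exists rho, accepting_run A s w rho.

Definition universal k Sigma L (A : RA k Sigma L) : Prop :=
  forall w : data_word Sigma, accepts_from A (init_state A) w.

Definition unambiguous k Sigma L (A : RA k Sigma L) : Prop :=
  forall (w : data_word Sigma) rho1 rho2,
    accepting_run A (init_state A) w rho1 ->
    accepting_run A (init_state A) w rho2 -> rho1 = rho2.

Definition URA k Sigma L (A : RA k Sigma L) : Prop := wf_RA A /\ unambiguous A.

Definition reachable_state k Sigma L (A : RA k Sigma L) (s : state k L) : Prop :=
  exists w rho, is_run A (init_state A) w rho /\ last (init_state A) rho = s.

Definition clean k Sigma L (A : RA k Sigma L) : Prop :=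
  forall s : state k L, reachable_state A s ->
    (exists w, accepts_from A s w) /\
    (forall (i j : 'I_k) (d : nat), i != j -> s.2 i = Some d -> s.2 j = Some d -> False).

Definition config k (L : finType) := state k L -> Prop.

Definition succ k Sigma L (A : RA k Sigma L) (C : config k L) (a : Sigma * nat)
  : config k L := fun s' => exists s, C s /\ step A s a s'.

Fixpoint succw k Sigma L (A : RA k Sigma L) (C : config k L) (w : data_word Sigma)
  : config k L :=
  match w with
  | [::] => C
  | a :: w' => succw A (succ A C a) w'
  end.

Definition reachable_config k Sigma L (A : RA k Sigma L) (C : config k L) : Prop :=
  exists w : data_word Sigma,
    forall s, C s <-> succw A (fun s0 => s0 = init_state A) w s.

(* Main.v *)
Require Import Defs.
From mathcomp Require Import all_boot zify.
Set Implicit Arguments. Unset Strict Implicit. Unset Printing Implicit Defensive.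

Section Auto.
Variables (k : nat) (Sigma L : finType) (A : RA k Sigma L).

Lemma run_cat s w1 w2 r1 r2 : is_run A s w1 r1 -> is_run A (last s r1) w2 r2 ->
  is_run A s (w1 ++ w2) (r1 ++ r2).
Proof.
elim: w1 r1 s => [|a w1 IH] [|s1 r1] s //=.
by move=> [H1 H2] H3; split; [exact H1 | exact: IH].
Qed.

Lemma run_size s w r : is_run A s w r -> size r = size w.
Proof. by elim: w r s => [|a w IH] [|s1 r] s //= [_ /IH ->]. Qed.

Lemma run_split s w1 w2 r : is_run A s (w1 ++ w2) r ->
  is_run A s w1 (take (size w1) r) /\
  is_run A (last s (take (size w1) r)) w2 (drop (size w1) r).
Proof.
elim: w1 r s => [|a w1 IH] [|s1 r] s //=.
move=> [H1 /IH [H2 H3]]; by split.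
Qed.

Lemma succw_run (C0 : config k L) w s : succw A C0 w s <->
  exists s0 r, C0 s0 /\ is_run A s0 w r /\ last s0 r = s.
Proof.
elim: w C0 => [|a w IH] C0 /=.
  split; first by move=> H; exists s, [::].
  by move=> [s0 [[|x r] [H0 [Hr Hl]]]] //=; rewrite -Hl.
rewrite IH; split.
  move=> [s1 [r [[s0 [H0 Hst]] [Hr Hl]]]]; by exists s0, (s1 :: r).
move=> [s0 [[|s1 r] [H0 [Hr Hl]]]] //=.
case: Hr => Hst Hr; exists s1, r; split => //; by exists s0.
Qed.

Lemma conj_sat (u v : valuation k) d (phi c : constr k) : List.In c (conjuncts phi) -> sat u d v phi -> sat u d v c.
Proof.
elim: phi => [|t1 t2|p IHp|p IHp q IHq|p IHp q IHq] /=; try by move=> [<-|[]].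
by move=> /(List.in_app_or _ _ _) [H|H] [Hp Hq]; [exact: IHp | exact: IHq].
Qed.

Definition vb B (u : valuation k) := forall r x, u r = Some x -> x <= B.

Lemma step_vb B s a s' : wf_RA A -> vb B s.2 -> a.2 <= B -> step A s a s' -> vb B s'.2.
Proof.
move=> wf Hs Ha [phi [Hin Hsat]] r x Hx.
have [H|H] := wf _ Hin r; have /= E := conj_sat H Hsat; rewrite E in Hx.
  exact: Hs Hx.
by case: Hx => <-.
Qed.

Lemma run_vb B s w r : wf_RA A -> vb B s.2 -> all (fun a => a.2 <= B) w ->
  is_run A s w r -> vb B (last s r).2.
Proof.
move=> wf; elim: w r s => [|a w IH] [|s1 r] s //= Hs /andP[Ha Hw] [Hst Hr].
apply: IH Hw Hr; exact: step_vb Hst.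
Qed.

Definition ren (f : nat -> nat) (u : valuation k) : valuation k := [ffun r => omap f (u r)].
Definition renw (f : nat -> nat) (w : data_word Sigma) : data_word Sigma :=
  map (fun a => (a.1, f a.2)) w.
Definition rens (f : nat -> nat) (s : state k L) : state k L := (s.1, ren f s.2).

Lemma omap_inj (f : nat -> nat) : injective f -> injective (omap f).
Proof. by move=> fi [x|] [y|] //= [/fi ->]. Qed.

Lemma sat_ren f (u v : valuation k) d (phi : constr k) : injective f ->
  (sat (ren f u) (f d) (ren f v) phi <-> sat u d v phi).
Proof.
move=> fi; elim: phi => [|t1 t2|p IHp|p IHp q IHq|p IHp q IHq] /=; try tauto.
have E : forall t, eval_term (ren f u) (f d) (ren f v) t = omap f (eval_term u d v t).
  by case=> [r|r|] /=; rewrite ?ffunE.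
rewrite !E; split; [exact: omap_inj | by move->].
Qed.

Lemma step_ren f s a s' : injective f -> step A s a s' ->
  step A (rens f s) (a.1, f a.2) (rens f s').
Proof.
move=> fi [phi [Hin Hs]]; exists phi; split => //=.
exact/(sat_ren _ _ _ _ fi).
Qed.

Lemma run_ren f s w r : injective f -> is_run A s w r ->
  is_run A (rens f s) (renw f w) (map (rens f) r).
Proof.
move=> fi; elim: w r s => [|a w IH] [|s1 r] s //= [Hst Hr].
split; [exact: step_ren | exact: IH].
Qed.

Lemma acc_ren f s w : injective f -> accepts_from A s w -> accepts_from A (rens f s) (renw f w).
Proof.
move=> fi [r [Hr Ha]]; exists (map (rens f) r); split; first exact: run_ren.
by rewrite last_map.
Qed.

End Auto.

Lemma size_cover (T : eqType) (I : finType) (P0 : pred T) (Pi : I -> pred T) (X : seq T) :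
  (forall x, x \in X -> P0 x || [exists i, Pi i x]) ->
  size X <= count P0 X + \sum_(i : I) count (Pi i) X.
Proof.
elim: X => [|x X IH] H //=.
have IH' : size X <= count P0 X + \sum_(i : I) count (Pi i) X.
  by apply: IH => y Hy; apply: H; rewrite inE Hy orbT.
have -> : \sum_(i : I) count (Pi i) (x :: X) =
   \sum_(i : I) (Pi i x : nat) + \sum_(i : I) count (Pi i) X.
  by rewrite -big_split; apply: eq_bigr.
have H1 : 1 <= P0 x + \sum_(i : I) (Pi i x : nat).
  have := H x (mem_head x X); case/orP => [->|/existsP [i Hi]]; first by [].
  rewrite (bigD1 i) //= Hi; lia.
lia.
Qed.

Definition cls k (Q : {set 'I_k}) (tv : valuation k) (p : 'I_k * option 'I_k) :
  pred (valuation k) :=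
  fun u => (p.1 \notin Q) && (u p.1 == if p.2 is Some r' then tv r' else None).

Lemma count_main k (P : valuation k -> Prop)
  (KPh : forall (Q : {set 'I_k}) (u1 : valuation k), P u1 -> (forall r, r \notin Q -> u1 r != None) ->
    exists tv : valuation k, forall uj, P uj ->
    (forall r, r \in Q -> uj r = u1 r) -> (forall r, r \notin Q -> uj r != None) ->
    uj = tv \/ exists r r', r \notin Q /\ uj r = tv r') :
  forall m (Q : {set 'I_k}) (X : seq (valuation k)), k - #|Q| <= m -> uniq X ->
    (forall u : valuation k, u \in X -> P u) ->
    (forall u u' : valuation k, u \in X -> u' \in X -> forall r, r \in Q -> u r = u' r) ->
    size X <= (k * k + k + 1) ^ m.
Proof.
have decomp : forall (Q : {set 'I_k}) (X : seq (valuation k)), uniq X -> (forall u : valuation k, u \in X -> P u) ->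
    (forall u u' : valuation k, u \in X -> u' \in X -> forall r, r \in Q -> u r = u' r) ->
    exists tv, size X <= 1 + \sum_(p : 'I_k * option 'I_k) count (cls Q tv p) X.
  move=> Q X Hu HP Hag.
  have [tv Htv] : exists tv : valuation k, forall u : valuation k, u \in X ->
      (u == tv) || [exists p, cls Q tv p u].
    case: (boolP (has (fun u : valuation k => [forall r, (r \in Q) || (u r != None)]) X)).
      case/hasP => u1 Hu1 /forallP Hall.
      have H1 : forall r, r \notin Q -> u1 r != None.
        by move=> r Hr; have := Hall r; rewrite (negbTE Hr).
      have [tv Htv] := KPh Q u1 (HP u1 Hu1) H1.
      exists tv => u Hu'.
      case: (boolP [forall r, (r \in Q) || (u r != None)]) => Hfu.
        move/forallP: Hfu => Hfu.
        have H2 : forall r, r \notin Q -> u r != None.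
          by move=> r Hr; have := Hfu r; rewrite (negbTE Hr).
        have := Htv u (HP u Hu') (fun r Hr => Hag u u1 Hu' Hu1 r Hr) H2.
        case=> [->|[r [r' [Hr E]]]]; first by rewrite eqxx.
        apply/orP; right; apply/existsP; exists (r, Some r').
        by rewrite /cls /= Hr E eqxx.
      apply/orP; right; move/forallPn: Hfu => [r].
      rewrite negb_or negbK => /andP [Hr /eqP E].
      apply/existsP; exists (r, None); by rewrite /cls /= Hr E eqxx.
    move/hasPn => Hn; exists [ffun _ => None] => u Hu'.
    have := Hn u Hu'; move/forallPn => [r].
    rewrite negb_or negbK => /andP [Hr /eqP E].
    apply/orP; right; apply/existsP; exists (r, None); by rewrite /cls /= Hr E eqxx.
  exists tv; apply: leq_trans (size_cover Htv) _.
  by rewrite count_uniq_mem // leq_add2r leq_b1.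
have cnt0 : forall (Q : {set 'I_k}) (tv : valuation k) (p : 'I_k * option 'I_k) (X : seq (valuation k)), p.1 \in Q -> count (cls Q tv p) X = 0.
  move=> Q tv p X Hp; apply/eqP; rewrite eqn0Ngt -has_count; apply/hasPn => u _.
  by rewrite /cls Hp.
elim=> [|m IH] Q X Hm Hu HP Hag.
  have [tv Htv] := decomp Q X Hu HP Hag.
  have HQ : forall r, r \in Q.
    move=> r; have : Q == [set: 'I_k].
      by rewrite eqEcard subsetT cardsT card_ord; lia.
    by move/eqP ->; rewrite inE.
  rewrite big1 in Htv; first by rewrite expn0.
  by move=> p _; rewrite cnt0.
have [tv Htv] := decomp Q X Hu HP Hag.
apply: leq_trans Htv _.
have Hs : \sum_(p : 'I_k * option 'I_k) count (cls Q tv p) X <=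
    \sum_(p : 'I_k * option 'I_k) (k * k + k + 1) ^ m.
  apply: leq_sum => p _.
  case: (boolP (p.1 \in Q)) => Hp; first by rewrite cnt0.
  rewrite -size_filter; apply: IH (p.1 |: Q) _ _ _ _ _.
  - rewrite cardsU1 Hp add1n subnS; move: Hm; lia.
  - exact: filter_uniq.
  - by move=> u; rewrite mem_filter => /andP [_ /HP].
  - move=> u u'; rewrite !mem_filter => /andP [Hcu Hu'] /andP [Hcu' Hu''] r.
    rewrite in_setU1 => /orP [/eqP ->|Hr]; last exact: Hag.
    by move: Hcu Hcu'; rewrite /cls => /andP [_ /eqP ->] /andP [_ /eqP ->].
rewrite sum_nat_const cardE -cardE card_prod card_option card_ord in Hs.
have Fp : 0 < (k * k + k + 1) ^ m by rewrite expn_gt0 addn1.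
rewrite expnS; move: Hs Fp; set F := _ ^ m; nia.
Qed.

Section Main.
Variables (k : nat) (Sigma L : finType) (A : RA k Sigma L).
Hypotheses (wf : wf_RA A) (unamb : unambiguous A) (cln : clean A) (univ : universal A).
Variables (C : config k L) (w : data_word Sigma).
Hypothesis HC : forall s, C s <-> succw A (fun s0 => s0 = init_state A) w s.

Lemma inC_run s : C s -> exists r, is_run A (init_state A) w r /\ last (init_state A) r = s.
Proof. by move=> /HC /succw_run [s0 [r [-> H]]]; exists r. Qed.

Lemma run_inC r : is_run A (init_state A) w r -> C (last (init_state A) r).
Proof. move=> Hr; apply/HC/succw_run; by exists (init_state A), r. Qed.

Lemma inC_reach s : C s -> reachable_state A s.
Proof. by move=> /inC_run [r H]; exists w, r. Qed.

Lemma disj s1 s2 z : C s1 -> C s2 -> accepts_from A s1 z -> accepts_from A s2 z -> s1 = s2.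
Proof.
move=> /inC_run [r1 [Hr1 <-]] /inC_run [r2 [Hr2 <-]] [p1 [Hp1 Ha1]] [p2 [Hp2 Ha2]].
have E := unamb (conj (run_cat Hr1 Hp1) _) (conj (run_cat Hr2 Hp2) _).
rewrite !last_cat in E; have {E} E := E Ha1 Ha2.
have := f_equal (take (size w)) E.
by rewrite !take_size_cat ?(run_size Hr1) ?(run_size Hr2) // => ->.
Qed.

Lemma cover z : exists t, C t /\ accepts_from A t z.
Proof.
have [r [Hr Ha]] := univ (w ++ z).
have [H1 H2] := run_split Hr.
exists (last (init_state A) (take (size w) r)); split; first exact: run_inC.
exists (drop (size w) r); split => //.
by rewrite -last_cat cat_take_drop.
Qed.

Definition B := sumn (map snd w).

Lemma allB : all (fun a => a.2 <= B) w.
Proof.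
rewrite /B; elim: w => [|a w' IH] //=; rewrite leq_addr /=.
apply: sub_all IH => b /= H; exact: leq_trans H (leq_addl _ _).
Qed.

Lemma vbC s : C s -> vb B s.2.
Proof.
move=> /inC_run [r [Hr <-]]; apply: run_vb wf _ allB Hr.
by move=> r0 x; rewrite ffunE.
Qed.

Lemma injC s : C s -> forall i j d, s.2 i = Some d -> s.2 j = Some d -> i = j.
Proof.
move=> /inC_reach /cln [_ H] i j d Hi Hj.
case: (eqVneq i j) => // Hn; case: (H i j d Hn Hi Hj).
Qed.


Lemma KP (l : L) (Q : {set 'I_k}) (u1 : valuation k) : C (l, u1) ->
  (forall r, r \notin Q -> u1 r != None) ->
  exists tv : valuation k, forall uj, C (l, uj) ->
    (forall r, r \in Q -> uj r = u1 r) -> (forall r, r \notin Q -> uj r != None) ->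
    uj = tv \/ exists r r', r \notin Q /\ uj r = tv r'.
Proof.
move=> C1 H1.
have [[v Hv] _] := cln (inC_reach C1).
have inj1 := injC C1.
have vb1 := vbC C1.
pose M := B.+1.
pose K x := [exists r, (r \in Q) && (u1 r == Some x)].
pose f x := if K x then x else x + M.
have KB : forall x, K x -> x <= B.
  by move=> x /existsP [r /andP [_ /eqP E]]; exact: vb1 E.
have finj : injective f.
  move=> x y; rewrite /f; case Kx: (K x); case Ky: (K y) => //.
  - by move=> E; have := KB x Kx; rewrite /M; lia.
  - by move=> E; have := KB y Ky; rewrite /M; lia.
  - by move/addIn.
have Hz := acc_ren finj Hv.
have [[tl tv] [Ct Ht]] := cover (renw f v).
exists tv => uj Cj HQ HnQ.
case: (boolP [exists r, [exists r', (r \notin Q) && (uj r == tv r')]]) => Hex.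
  right; move/existsP: Hex => [r /existsP [r' /andP [Hr /eqP E]]].
  by exists r, r'.
left.
have injj := injC Cj.
have vbj := vbC Cj.
have vbt := vbC Ct.
pose h y := if M <= y then
    (if [pick r | (r \notin Q) && (u1 r == Some (y - M))] is Some r then odflt 0 (uj r) else y)
  else (if [pick r | (r \notin Q) && (uj r == Some y)] is Some r then odflt 0 (u1 r) + M else y).
have h_hi : forall r a, r \notin Q -> u1 r = Some a -> h (a + M) = odflt 0 (uj r).
  move=> r a Hr Ha; rewrite /h leq_addl addnK.
  case: pickP => [r' /andP [_ /eqP Hr']|Hn]; first by rewrite (inj1 _ _ _ Hr' Ha).
  by have := Hn r; rewrite Hr Ha eqxx.
have h_lo : forall r b, r \notin Q -> uj r = Some b -> h b = odflt 0 (u1 r) + M.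
  move=> r b Hr Hb; rewrite /h.
  have -> : (M <= b) = false by have := vbj _ _ Hb; rewrite /M; lia.
  case: pickP => [r' /andP [_ /eqP Hr']|Hn]; first by rewrite (injj _ _ _ Hr' Hb).
  by have := Hn r; rewrite Hr Hb eqxx.
have h_fixlo : forall y, y < M -> (forall r, r \notin Q -> uj r != Some y) -> h y = y.
  move=> y Hy Hn; rewrite /h.
  have -> : (M <= y) = false by lia.
  case: pickP => [r' /andP [Hr' Hr'']|//].
  by have := Hn r' Hr'; rewrite Hr''.
have h_fixhi : forall y, M <= y -> (forall r, r \notin Q -> u1 r != Some (y - M)) -> h y = y.
  move=> y Hy Hn; rewrite /h Hy.
  case: pickP => [r' /andP [Hr' Hr'']|//].
  by have := Hn r' Hr'; rewrite Hr''.
have hinv : forall y, h (h y) = y.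
  move=> y; case: (leqP M y) => Hy.
    case: (pickP [pred r | (r \notin Q) && (u1 r == Some (y - M))]) =>
      [r /andP [Hr /eqP Ha]|Hn].
      have := HnQ r Hr; case Eb: (uj r) => [b|] // _.
      have -> : h y = b.
        by rewrite -{1}(subnK Hy) (h_hi _ _ Hr Ha) Eb.
      by rewrite (h_lo _ _ Hr Eb) Ha /= subnK.
    have Hf : forall r, r \notin Q -> u1 r != Some (y - M).
      by move=> r Hr; move: (Hn r); rewrite /= Hr /= => ->.
    by rewrite !(h_fixhi y Hy Hf).
  case: (pickP [pred r | (r \notin Q) && (uj r == Some y)]) => [r /andP [Hr /eqP Hb]|Hn].
    have := H1 r Hr; case Ea: (u1 r) => [a|] // _.
    rewrite (h_lo _ _ Hr Hb) Ea /= (h_hi _ _ Hr Ea) Hb //.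
  have Hf : forall r, r \notin Q -> uj r != Some y.
    by move=> r Hr; move: (Hn r); rewrite /= Hr /= => ->.
  by rewrite !(h_fixlo y Hy Hf).
have hinj : injective h := can_inj hinv.
have E1 : ren h (ren f u1) = uj.
  apply/ffunP => r; rewrite !ffunE.
  case: (boolP (r \in Q)) => Hr.
    rewrite (HQ r Hr); case E: (u1 r) => [x|] //=.
    have -> : f x = x by rewrite /f; have -> // : K x; apply/existsP; exists r; rewrite Hr E eqxx.
    rewrite h_fixlo //; first by have := vb1 _ _ E; rewrite /M; lia.
    move=> r' Hr'; apply/negP => /eqP Hj.
    have Hjr : uj r = Some x by rewrite HQ.
    have Err := injj _ _ _ Hj Hjr; by rewrite Err Hr in Hr'.
  have := H1 r Hr; case E: (u1 r) => [a|] //= _.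
  have -> : f a = a + M.
    rewrite /f; case Ka: (K a) => //.
    move/existsP: Ka => [r' /andP [Hr' /eqP Ea]].
    by move: Hr; rewrite -(inj1 _ _ _ Ea E) Hr'.
  rewrite (h_hi _ _ Hr E).
  by have := HnQ r Hr; case: (uj r).
have E2 : ren h tv = tv.
  apply/ffunP => r; rewrite ffunE; case E: (tv r) => [y|] //=.
  congr Some; apply: h_fixlo; first by have := vbt _ _ E; rewrite /M; lia.
  move=> r' Hr'; apply/negP => /eqP Hu; move/negP: Hex; apply.
  apply/existsP; exists r'; apply/existsP; exists r; by rewrite Hr' Hu E eqxx.
have A1 := acc_ren hinj Hz.
have A2 := acc_ren hinj Ht.
rewrite /rens /= in A1 A2; rewrite E1 in A1; rewrite E2 in A2.
by have [_ ->] := disj Ct Cj A2 A1.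
Qed.
End Main.

Lemma three_le k : 3 * k <= 4 ^ k.
Proof.
elim: k => [|k IH] //; rewrite expnS.
have : 0 < 4 ^ k by rewrite expn_gt0.
lia.
Qed.

Theorem lemma1 :
  forall (k : nat) (Sigma L : finType) (A : RA k Sigma L),
    1 <= k ->
    URA A -> clean A -> universal A ->
    forall C : config k L, reachable_config A C ->
    forall (l : L) (S : seq (state k L)),
      uniq S -> (forall s, s \in S -> C s /\ s.1 = l) ->
      size S <= (k * 4 ^ k * k`!) ^ k.
Proof.
move=> k Sigma L A k1 [wf unamb] cln univ C [w HC] l S HS HSC.
have Hsz : size S = size (map snd S) by rewrite size_map.
have HX : uniq (map snd S).
  rewrite map_inj_in_uniq // => [[l1 u1] [l2 u2]] /HSC [_ /= ->] /HSC [_ /= ->] /= ->.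
  by [].
have key := @count_main k (fun u => C (l, u)) (fun Q u1 H => KP wf unamb cln univ HC (l:=l) (Q:=Q) (u1:=u1) H) k set0 (map snd S).
rewrite Hsz; apply: leq_trans (key _ HX _ _) _.
- by rewrite cards0 subn0.
- move=> u /mapP [s Hs ->]; have [Cs Hl] := HSC s Hs.
  by move: Cs; rewrite -Hl; case: s {Hs Hl}.
- by move=> u u' _ _ r; rewrite inE.
rewrite leq_exp2r //.
have h3 := three_le k.
have f1 : 0 < k`! := fact_gt0 k.
have h4 : k * k + k + 1 <= k * 4 ^ k by nia.
apply: leq_trans h4 _; rewrite -{1}(muln1 (k * 4 ^ k)); exact: leq_mul.
Qed.
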